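(* For each $a\in S^A$, let $P^A_a=\sum_{\alpha\in\Omega^A}P^A_{f_a(\alpha)}$ and $K^{A'}_a=\sqrt{P^A_a}\otimes|a\rangle_{\tilde A}$. Define $$\mathcal G'(\sigma)=V\Pi\Big(\sum_{a\in S^A,b\in S^B}(K^{A'}_a\otimes K^B_b)\sigma(K^{A'}_a\otimes K^B_b)^\dagger\Big)\Pi V^\dagger,$$ which is $\mathcal G$ with the register $\bar A$ omitted. Then for every density operator $\rho_{AB}$ on $H_A\otimes H_B$, $$D\big(\mathcal G(\rho_{AB})\,\|\,\mathcal Z[\mathcal G(\rho_{AB})]\big)=D\big(\mathcal G'(\rho_{AB})\,\|\,\mathcal Z[\mathcal G'(\rho_{AB})]\big).$$
   Context: Setting (reverse-reconciliation postprocessing). Registers and measurements. $H_A,H_B$ are finite-dimensional Hilbert spaces. Alice has a POVM $\{P^A_x\}_{x\in\mathcal X}$ on $H_A$, and Bob has a POVM $\{P^B_y\}_{y\in\mathcal Y}$ on $H_B$. Alice's announcement set $S^A$ gives a partition $\mathcal X=\bigcup_{a\in S^A}\mathcal X_a$ with $|\mathcal X_a|=\omega_A$ for all $a$. Bob's announcement set $S^B$ gives a partition $\mathcal Y=\bigcup_{b\in S^B}\mathcal Y_b$ with $|\mathcal Y_b|=\omega_B$ for all $b$. Fix bijections $f_a:\Omega^A=\{1,\dots,\omega_A\}\to\mathcal X_a$ and $f_b:\Omega^B=\{1,\dots,\omega_B\}\to\mathcal Y_b$. The registers $\tilde A,\tilde B,\bar A,\bar B$ have orthonormal bases $\{|a\rangle\}_{a\in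 S^A}$, $\{|b\rangle\}_{b\in S^B}$, $\{|\alpha\rangle\}_{\alpha\in\Omega^A}$ and $\{|\beta\rangle\}_{\beta\in\Omega^B}$ respectively. Announcement map. Define $$K^A_a=\sum_{\alpha\in\Omega^A}\sqrt{P^A_{f_a(\alpha)}}\otimes|a\rangle_{\tilde A}\otimes|\alpha\rangle_{\bar A},\qquad K^B_b=\sum_{\beta\in\Omega^B}\sqrt{P^B_{f_b(\beta)}}\otimes|b\rangle_{\tilde B}\otimes|\beta\rangle_{\bar B},$$ and $\mathcal A(\sigma)=\sum_{a\in S^A,b\in S^B}(K^A_a\otimes K^B_b)\sigma(K^A_a\otimes K^B_b)^\dagger$. Sifting. Fix a subset $\mathbf K\subseteq S^A\times S^B$ of kept announcements and let $\Pi=\sum_{(a,b)\in\mathbf K}|a\rangle\langle a|_{\tilde A}\otimes|b\rangle\langle b|_{\tilde B}$. Key map. Fix a key map $g:\mathbf K\times\mathcal Y\to\{0,\dots,N-1\}$, which does not depend on Alice's outcome (reverse reconciliation). The register $R$ has orthonormal basis $\{|j\rangle\}_{j=0}^{N-1}$. Define $$V=\sum_{(a,b)\in\mathbf K,\ \beta\in\Omega^B}|g(a,b,f_b(\beta))\rangle_R\otimes|a\rangle\langle a|_{\tilde A}\otimes|b\rangle\langle b|_{\tilde B}\otimes|\beta\rangle\langle\beta|_{\bar B}.$$ Maps. $\mathcal G(\sigma)=V\Pi\mathcal A(\sigma)\Pi V^\dagger$, and $\mathcal Z(\sigma)=\sum_{j=0}^{N-1}(|j\rangle\langle j|_R\otimes\mathbb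 1)\sigma(|j\rangle\langle j|_R\otimes\mathbb 1)$. Relative entropy. $D(\rho\|\sigma)=\operatorname{Tr}(\rho\log_2\rho)-\operatorname{Tr}(\rho\log_2\sigma)$, used also for subnormalized positive operators. *)

(* Defs.v *)
From HB Require Import structures.
From Stdlib Require Import Reals Lra ClassicalEpsilon FunctionalExtensionality.
From mathcomp Require Import ssreflect ssrfun ssrbool eqtype ssrnat seq choice
  fintype finfun bigop finset.

Set Implicit Arguments.
Local Open Scope type_scope.
Unset Strict Implicit.
Unset Printing Implicit Defensive.

Local Open Scope R_scope.

Record C := mkC { Cre : R; Cim : R }.

Definition C0 : C := mkC 0 0.
Definition C1 : C := mkC 1 0.
Definition RtoC (x : R) : C := mkC x 0.
Definition Cadd (x y : C) : C := mkC (Cre x + Cre y) (Cim x + Cim y).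
Definition Copp (x : C) : C := mkC (- Cre x) (- Cim x).
Definition Cmul (x y : C) : C :=
  mkC (Cre x * Cre y - Cim x * Cim y) (Cre x * Cim y + Cim x * Cre y).
Definition Cconj (x : C) : C := mkC (Cre x) (- Cim x).

Lemma C_eq (x y : C) : Cre x = Cre y -> Cim x = Cim y -> x = y.
Proof. by case: x => ? ?; case: y => ? ? /= -> ->. Qed.

Lemma CaddA : associative Cadd.
Proof. move=> x y z; apply: C_eq => /=; ring. Qed.
Lemma CaddC : commutative Cadd.
Proof. move=> x y; apply: C_eq => /=; ring. Qed.
Lemma Cadd0l : left_id C0 Cadd.
Proof. move=> x; apply: C_eq => /=; ring. Qed.
Lemma CmulA : associative Cmul.
Proof. move=> x y z; apply: C_eq => /=; ring. Qed.
Lemma CmulC : commutative Cmul.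
Proof. move=> x y; apply: C_eq => /=; ring. Qed.
Lemma Cmul1l : left_id C1 Cmul.
Proof. move=> x; apply: C_eq => /=; ring. Qed.
Lemma Cmul0l : left_zero C0 Cmul.
Proof. move=> x; apply: C_eq => /=; ring. Qed.
Lemma Cmul0r : right_zero C0 Cmul.
Proof. move=> x; apply: C_eq => /=; ring. Qed.
Lemma CmulDl : left_distributive Cmul Cadd.
Proof. move=> x y z; apply: C_eq => /=; ring. Qed.
Lemma CmulDr : right_distributive Cmul Cadd.
Proof. move=> x y z; apply: C_eq => /=; ring. Qed.

HB.instance Definition _ := Monoid.isComLaw.Build C C0 Cadd CaddA CaddC Cadd0l.
HB.instance Definition _ := Monoid.isComLaw.Build C C1 Cmul CmulA CmulC Cmul1l.
HB.instance Definition _ := Monoid.isMulLaw.Build C C0 Cmul Cmul0l Cmul0r.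
HB.instance Definition _ := Monoid.isAddLaw.Build C Cmul Cadd CmulDl CmulDr.

Local Close Scope R_scope.

(* ---------- matrices indexed by finite types ----------
   A finite-dimensional Hilbert space is C^T for a finite type T (its
   orthonormal basis); tensor products correspond to product index types.
   [mx T U] is a linear map C^U -> C^T (rows T, columns U). *)
Definition mx (T U : finType) := T -> U -> C.

Definition mxmul (T U V : finType) (M : mx T U) (N : mx U V) : mx T V :=
  fun i k => \big[Cadd/C0]_(j : U) Cmul (M i j) (N j k).
Definition adj (T U : finType) (M : mx T U) : mx U T :=
  fun j i => Cconj (M i j).
Definition mxsum (T U I : finType) (F : I -> mx T U) : mx T U :=
  fun i j => \big[Cadd/C0]_(k : I) F k i j.
Definition idmx (T : finType) : mx T T :=
  fun i j => if i == j then C1 else C0.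
Definition mxzero (T U : finType) : mx T U := fun _ _ => C0.
Definition kron (T1 U1 T2 U2 : finType) (M : mx T1 U1) (N : mx T2 U2)
  : mx (T1 * T2) (U1 * U2) :=
  fun i j => Cmul (M i.1 j.1) (N i.2 j.2).
Definition proj (S : finType) (k : S) : mx S S :=
  fun i j => if (i == k) && (j == k) then C1 else C0.
(* M (x) |k>  (the ket is appended as the last tensor factor) *)
Definition tens_ket (T U S : finType) (M : mx T U) (k : S) : mx (T * S) U :=
  fun i j => if i.2 == k then M i.1 j else C0.
(* |k> (x) M  (the ket is prepended as the first tensor factor) *)
Definition ket_tens (S T U : finType) (k : S) (M : mx T U) : mx (S * T) U :=
  fun i j => if i.1 == k then M i.2 j else C0.
Definition trace (T : finType) (M : mx T T) : C :=
  \big[Cadd/C0]_(i : T) M i i.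
Definition diagR (T : finType) (d : T -> R) : mx T T :=
  fun i j => if i == j then RtoC (d i) else C0.

Definition applyv (T U : finType) (M : mx T U) (v : U -> C) : T -> C :=
  fun i => \big[Cadd/C0]_(j : U) Cmul (M i j) (v j).
Definition inner (T : finType) (u v : T -> C) : C :=
  \big[Cadd/C0]_(i : T) Cmul (Cconj (u i)) (v i).
Definition psd (T : finType) (M : mx T T) : Prop :=
  forall v : T -> C, (Cim (inner v (applyv M v)) = 0 /\ 0 <= Cre (inner v (applyv M v)))%R.
Definition density (T : finType) (rho : mx T T) : Prop :=
  psd rho /\ trace rho = C1.
Definition POVM (X T : finType) (P : X -> mx T T) : Prop :=
  (forall x, psd (P x)) /\ mxsum P = @idmx T.

Definition unitary (T : finType) (U : mx T T) : Prop :=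
  mxmul (adj U) U = @idmx T /\ mxmul U (adj U) = @idmx T.

Definition sqrtm (T : finType) (M : mx T T) : mx T T :=
  epsilon (inhabits (@mxzero T T)) (fun N => psd N /\ mxmul N N = M).

Definition spectral (T : finType) (M : mx T T) (p : mx T T * (T -> R)) : Prop :=
  unitary p.1 /\ M = mxmul (mxmul p.1 (diagR p.2)) (adj p.1).

(* f(M) for Hermitian M, via a chosen spectral decomposition *)
Definition funm (T : finType) (f : R -> R) (M : mx T T) : mx T T :=
  let p := epsilon (inhabits (@idmx T, fun _ : T => 0%R)) (spectral M) in
  mxmul (mxmul p.1 (diagR (fun i => f (p.2 i)))) (adj p.1).

Definition log2 (x : R) : R := (ln x / ln 2)%R.

(* log_2 taken on the support (0 on the kernel); this realizes the
   conventions 0 log 0 = 0 and the restriction of log sigma to supp sigma *)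
Definition log2m (T : finType) (M : mx T T) : mx T T :=
  funm (fun x => if Rlt_dec 0 x then log2 x else 0%R) M.

Definition kernel_incl (T : finType) (sigma rho : mx T T) : Prop :=
  forall v : T -> C, applyv sigma v = (fun _ => C0) -> applyv rho v = (fun _ => C0).

(* Relative entropy D(rho||sigma) = Tr(rho log2 rho) - Tr(rho log2 sigma),
   with value None (= +infinity) when supp rho is not contained in supp sigma. *)
Definition relent (T : finType) (rho sigma : mx T T) : option R :=
  if excluded_middle_informative (kernel_incl sigma rho) then
    Some (Cre (trace (mxmul rho (log2m rho))) - Cre (trace (mxmul rho (log2m sigma))))%R
  else None.

(* Kraus operator K^A_a : H_A -> H_A (x) A~ (x) A-bar *)
Definition KrausA (HA X SA : finType) (wA : nat) (PA : X -> mx HA HA)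
  (fA : SA -> 'I_wA -> X) (a : SA) : mx (HA * SA * 'I_wA) HA :=
  mxsum (fun al : 'I_wA => tens_ket (tens_ket (sqrtm (PA (fA a al))) a) al).

Definition KrausA' (HA X SA : finType) (wA : nat) (PA : X -> mx HA HA)
  (fA : SA -> 'I_wA -> X) (a : SA) : mx (HA * SA) HA :=
  tens_ket (sqrtm (mxsum (fun al : 'I_wA => PA (fA a al)))) a.

Definition annmap (HA HB SA SB WA WB : finType)
  (KA : SA -> mx WA HA) (KB : SB -> mx WB HB) (sigma : mx (HA * HB) (HA * HB))
  : mx (WA * WB) (WA * WB) :=
  mxsum (fun ab : SA * SB =>
    mxmul (mxmul (kron (KA ab.1) (KB ab.2)) sigma) (adj (kron (KA ab.1) (KB ab.2)))).

Definition Kept (SA SB : finType) (Kset : {set SA * SB}) : finType :=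
  {ab : SA * SB | ab \in Kset}.

(* Pi = sum_{(a,b) in K} |a><a|_{A~} (x) |b><b|_{B~} (identity elsewhere);
   projA a is |a><a|_{A~} tensored with the identity on Alice's other registers *)
Definition sift (SA SB WA WB : finType) (Kset : {set SA * SB})
  (projA : SA -> mx WA WA) (projB : SB -> mx WB WB) : mx (WA * WB) (WA * WB) :=
  mxsum (fun k : Kept Kset => kron (projA (val k).1) (projB (val k).2)).

(* V = sum_{(a,b) in K, beta} |g(a,b,f_b(beta))>_R (x) |a><a| (x) |b><b| (x) |beta><beta| *)
Definition keyiso (HB Y SA SB WA : finType) (wB N : nat) (Kset : {set SA * SB})
  (fB : SB -> 'I_wB -> Y) (g : Kept Kset -> Y -> 'I_N)
  (projA : SA -> mx WA WA) : mx ('I_N * (WA * (HB * SB * 'I_wB))) (WA * (HB * SB * 'I_wB)) :=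
  mxsum (fun kb : Kept Kset * 'I_wB =>
    ket_tens (g kb.1 (fB (val kb.1).2 kb.2))
      (kron (projA (val kb.1).1)
            (kron (kron (@idmx HB) (proj (val kb.1).2)) (proj kb.2)))).

Definition projB (HB SB : finType) (wB : nat) (b : SB) : mx (HB * SB * 'I_wB) (HB * SB * 'I_wB) :=
  kron (kron (@idmx HB) (proj b)) (@idmx 'I_wB).
Definition projA (HA SA : finType) (wA : nat) (a : SA) : mx (HA * SA * 'I_wA) (HA * SA * 'I_wA) :=
  kron (kron (@idmx HA) (proj a)) (@idmx 'I_wA).
Definition projA' (HA SA : finType) (a : SA) : mx (HA * SA) (HA * SA) :=
  kron (@idmx HA) (proj a).

Definition Gmap (HA HB X Y SA SB : finType) (wA wB N : nat)
  (PA : X -> mx HA HA) (PB : Y -> mx HB HB)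
  (fA : SA -> 'I_wA -> X) (fB : SB -> 'I_wB -> Y)
  (Kset : {set SA * SB}) (g : Kept Kset -> Y -> 'I_N)
  (sigma : mx (HA * HB) (HA * HB)) :=
  let V := keyiso (HB:=HB) fB g (@projA HA SA wA) in
  let Pi := sift Kset (@projA HA SA wA) (@projB HB SB wB) in
  mxmul (mxmul V (mxmul (mxmul Pi (annmap (KrausA PA fA) (KrausA PB fB) sigma)) Pi)) (adj V).

Definition Gmap' (HA HB X Y SA SB : finType) (wA wB N : nat)
  (PA : X -> mx HA HA) (PB : Y -> mx HB HB)
  (fA : SA -> 'I_wA -> X) (fB : SB -> 'I_wB -> Y)
  (Kset : {set SA * SB}) (g : Kept Kset -> Y -> 'I_N)
  (sigma : mx (HA * HB) (HA * HB)) :=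
  let V := keyiso (HB:=HB) fB g (@projA' HA SA) in
  let Pi := sift Kset (@projA' HA SA) (@projB HB SB wB) in
  mxmul (mxmul V (mxmul (mxmul Pi (annmap (KrausA' PA fA) (KrausA PB fB) sigma)) Pi)) (adj V).

(* pinching on the key register R *)
Definition Zmap (N : nat) (T : finType) (sigma : mx ('I_N * T) ('I_N * T))
  : mx ('I_N * T) ('I_N * T) :=
  mxsum (fun j : 'I_N =>
    mxmul (mxmul (kron (proj j) (@idmx T)) sigma) (kron (proj j) (@idmx T))).

(* Main.v *)
Require Import Defs.
From HB Require Import structures.
From Stdlib Require Import Reals Lra ClassicalEpsilon FunctionalExtensionality.
From mathcomp Require Import ssreflect ssrfun ssrbool eqtype ssrnat seq choice
  fintype finfun bigop finset.
From mathcomp Require Import all_boot all_order all_algebra.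
From mathcomp Require Import complex Rstruct.
Require Import Defs.
Set Implicit Arguments.
Unset Strict Implicit.
Unset Printing Implicit Defensive.

Ltac Cring := apply: C_eq => /=; ring.

Lemma Cadd0r x : Cadd x C0 = x. Proof. Cring. Qed.
Lemma Cmul1r x : Cmul x C1 = x. Proof. Cring. Qed.
Lemma CconjK x : Cconj (Cconj x) = x. Proof. Cring. Qed.
Lemma CconjD x y : Cconj (Cadd x y) = Cadd (Cconj x) (Cconj y). Proof. Cring. Qed.
Lemma CconjM x y : Cconj (Cmul x y) = Cmul (Cconj x) (Cconj y). Proof. Cring. Qed.
Lemma Cconj0 : Cconj C0 = C0. Proof. Cring. Qed.
Lemma Cconj1 : Cconj C1 = C1. Proof. Cring. Qed.
Lemma CconjR r : Cconj (RtoC r) = RtoC r. Proof. Cring. Qed.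
Lemma RtoCD a b : RtoC (Rplus a b) = Cadd (RtoC a) (RtoC b). Proof. Cring. Qed.
Lemma RtoCM a b : RtoC (Rmult a b) = Cmul (RtoC a) (RtoC b). Proof. Cring. Qed.
Lemma RtoC0 : RtoC R0 = C0. Proof. by []. Qed.
Lemma RtoC1 : RtoC R1 = C1. Proof. by []. Qed.

Lemma Cconj_sum (I : Type) (r : seq I) (P : pred I) (F : I -> C) :
  Cconj (\big[Cadd/C0]_(i <- r | P i) F i) = \big[Cadd/C0]_(i <- r | P i) Cconj (F i).
Proof. apply: (big_morph Cconj CconjD Cconj0). Qed.

Lemma RtoC_sum (I : Type) (r : seq I) (P : pred I) (F : I -> R) :
  RtoC (\big[Rplus/R0]_(i <- r | P i) F i) = \big[Cadd/C0]_(i <- r | P i) RtoC (F i).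
Proof. apply: (big_morph RtoC RtoCD RtoC0). Qed.

Lemma Cre_sum (I : Type) (r : seq I) (P : pred I) (F : I -> C) :
  Cre (\big[Cadd/C0]_(i <- r | P i) F i) = \big[Rplus/R0]_(i <- r | P i) Cre (F i).
Proof. apply: (big_morph Cre) => //. Qed.
Lemma Cim_sum (I : Type) (r : seq I) (P : pred I) (F : I -> C) :
  Cim (\big[Cadd/C0]_(i <- r | P i) F i) = \big[Rplus/R0]_(i <- r | P i) Cim (F i).
Proof. apply: (big_morph Cim) => //. Qed.

Lemma mx_ext (T U : finType) (A B : mx T U) : (forall i j, A i j = B i j) -> A = B.
Proof. move=> h; apply: functional_extensionality => i; apply: functional_extensionality => j; exact: h. Qed.

Lemma mxmulA (T U V W : finType) (A : mx T U) (B : mx U V) (D : mx V W) :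
  mxmul (mxmul A B) D = mxmul A (mxmul B D).
Proof.
apply: mx_ext => i l; rewrite /mxmul.
under eq_bigr => j _ do rewrite big_distrl.
rewrite exchange_big; apply: eq_bigr => k _.
rewrite big_distrr; apply: eq_bigr => j _; exact/esym/CmulA.
Qed.

Lemma adjK (T U : finType) (A : mx T U) : adj (adj A) = A.
Proof. apply: mx_ext => i j; by rewrite /adj CconjK. Qed.

Lemma adj_mul (T U V : finType) (A : mx T U) (B : mx U V) :
  adj (mxmul A B) = mxmul (adj B) (adj A).
Proof.
apply: mx_ext => i j; rewrite /adj /mxmul Cconj_sum; apply: eq_bigr => k _.
by rewrite CconjM CmulC.
Qed.

Lemma mxmul_suml (T U V I : finType) (F : I -> mx T U) (B : mx U V) :
  mxmul (mxsum F) B = mxsum (fun k => mxmul (F k) B).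
Proof.
apply: mx_ext => i j; rewrite /mxmul /mxsum.
under eq_bigr => l _ do rewrite big_distrl.
by rewrite exchange_big.
Qed.

Lemma mxmul_sumr (T U V I : finType) (A : mx T U) (F : I -> mx U V) :
  mxmul A (mxsum F) = mxsum (fun k => mxmul A (F k)).
Proof.
apply: mx_ext => i j; rewrite /mxmul /mxsum.
under eq_bigr => l _ do rewrite big_distrr.
by rewrite exchange_big.
Qed.

Lemma adj_sum (T U I : finType) (F : I -> mx T U) :
  adj (mxsum F) = mxsum (fun k => adj (F k)).
Proof. apply: mx_ext => i j; by rewrite /adj /mxsum Cconj_sum. Qed.

Lemma trace_mulC (T U : finType) (A : mx T U) (B : mx U T) :
  trace (mxmul A B) = trace (mxmul B A).
Proof.
rewrite /trace /mxmul exchange_big; apply: eq_bigr => i _; apply: eq_bigr => j _.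
by rewrite CmulC.
Qed.

Lemma mxmul1 (T U : finType) (A : mx T U) : mxmul A (@idmx U) = A.
Proof.
apply: mx_ext => i j; rewrite /mxmul /idmx (bigD1 j) //= eqxx Cmul1r big1 ?Cadd0r //.
by move=> k /negbTE ->; rewrite Cmul0r.
Qed.

Lemma mul1mx (T U : finType) (A : mx T U) : mxmul (@idmx T) A = A.
Proof.
apply: mx_ext => i j; rewrite /mxmul /idmx (bigD1 i) //= eqxx Cmul1l big1 ?Cadd0r //.
by move=> k; rewrite eq_sym => /negbTE ->; rewrite Cmul0l.
Qed.

Lemma adj_id (T : finType) : adj (@idmx T) = @idmx T.
Proof. apply: mx_ext => i j; rewrite /adj /idmx eq_sym; case: (i == j); [exact: Cconj1 | exact: Cconj0]. Qed.

Lemma kron_mul (T1 U1 V1 T2 U2 V2 : finType) (A : mx T1 U1) (B : mx T2 U2)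
  (A' : mx U1 V1) (B' : mx U2 V2) :
  mxmul (kron A B) (kron A' B') = kron (mxmul A A') (mxmul B B').
Proof.
apply: mx_ext => i j; rewrite /mxmul /kron.
rewrite [RHS]big_distrlr /= pair_bigA; apply: eq_bigr => -[k1 k2] _ /=.
Cring.
Qed.

Lemma adj_kron (T1 U1 T2 U2 : finType) (A : mx T1 U1) (B : mx T2 U2) :
  adj (kron A B) = kron (adj A) (adj B).
Proof. apply: mx_ext => i j; by rewrite /adj /kron CconjM. Qed.

Lemma mxsum_ext (T U I : finType) (F G : I -> mx T U) : (forall k, F k = G k) -> mxsum F = mxsum G.
Proof. move=> h; by apply: mx_ext => i j; rewrite /mxsum; apply: eq_bigr => k _; rewrite h. Qed.


Definition mscale (T U : finType) (c : C) (A : mx T U) : mx T U := fun i j => Cmul c (A i j).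
Definition mpow (T : finType) (N : mx T T) (k : nat) : mx T T := iter k (mxmul N) (@idmx T).
Definition pevm (T : finType) (p : {poly R}) (N : mx T T) : mx T T :=
  mxsum (fun i : 'I_(size p) => mscale (RtoC (p`_i)%R) (mpow N i)).

Lemma trace_sum (T I : finType) (F : I -> mx T T) :
  trace (mxsum F) = \big[Cadd/C0]_(k : I) trace (F k).
Proof. by rewrite /trace /mxsum exchange_big. Qed.

Lemma mxmul_scaler (T U V : finType) (A : mx T U) c (B : mx U V) :
  mxmul A (mscale c B) = mscale c (mxmul A B).
Proof.
apply: mx_ext => i j; rewrite /mxmul /mscale big_distrr; apply: eq_bigr => k _ /=.
Cring.
Qed.

Lemma trace_scale (T : finType) c (A : mx T T) : trace (mscale c A) = Cmul c (trace A).
Proof. by rewrite /trace /mscale big_distrr. Qed.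

Lemma trace_pev (T : finType) (M : mx T T) p (N : mx T T) :
  trace (mxmul M (pevm p N)) =
  \big[Cadd/C0]_(i < size p) Cmul (RtoC (p`_i)%R) (trace (mxmul M (mpow N i))).
Proof.
rewrite /pevm mxmul_sumr trace_sum; apply: eq_bigr => i _.
by rewrite mxmul_scaler trace_scale.
Qed.

Lemma gram_pow (T S : finType) (X : mx T S) k :
  mxmul (mpow (mxmul X (adj X)) k) X = mxmul X (mpow (mxmul (adj X) X) k).
Proof.
elim: k => [|k IH] /=; first by rewrite mul1mx mxmul1.
by rewrite mxmulA IH -!mxmulA.
Qed.

Lemma trace_gram (T S : finType) (X : mx T S) k :
  trace (mxmul (mxmul X (adj X)) (mpow (mxmul X (adj X)) k)) =
  trace (mpow (mxmul (adj X) X) k.+1).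
Proof.
rewrite mxmulA trace_mulC mxmulA gram_pow /=.
by rewrite -mxmulA.
Qed.

Lemma trace_pev_gram (T1 T2 S : finType) (X1 : mx T1 S) (X2 : mx T2 S) p :
  mxmul (adj X1) X1 = mxmul (adj X2) X2 ->
  trace (mxmul (mxmul X1 (adj X1)) (pevm p (mxmul X1 (adj X1)))) =
  trace (mxmul (mxmul X2 (adj X2)) (pevm p (mxmul X2 (adj X2)))).
Proof.
move=> h; rewrite !trace_pev; apply: eq_bigr => i _.
by rewrite !trace_gram h.
Qed.

Definition blk (I T U : finType) (F : I -> mx T U) : mx T (U * I)%type :=
  fun t ui => F ui.2 t ui.1.

Lemma blk_gram (I T U : finType) (F : I -> mx T U) :
  mxmul (blk F) (adj (blk F)) = mxsum (fun i => mxmul (F i) (adj (F i))).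
Proof.
apply: mx_ext => t t'; rewrite /mxmul /mxsum /blk /adj.
rewrite -(pair_big xpredT xpredT (fun u i => Cmul (F i t u) (Cconj (F i t' u)))) /=.
exact: exchange_big.
Qed.

Lemma blk_adj_mul (I T U J V : finType) (F : I -> mx T U) (G : J -> mx T V) ui vj :
  mxmul (adj (blk F)) (blk G) ui vj = mxmul (adj (F ui.2)) (G vj.2) ui.1 vj.1.
Proof. by []. Qed.

Definition Pj (N : nat) (T : finType) (j : 'I_N) : mx ('I_N * T)%type ('I_N * T)%type :=
  kron (proj j) (@idmx T).

Lemma Zmap_sum (N : nat) (T : finType) (M : mx ('I_N * T)%type ('I_N * T)%type) :
  Zmap M = mxsum (fun j => mxmul (mxmul (Pj j) M) (Pj j)).
Proof. by []. Qed.

Lemma adj_Pj (N : nat) (T : finType) (j : 'I_N) : adj (@Pj N T j) = Pj j.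
Proof.
apply: mx_ext => -[a t] [b u]; rewrite /adj /Pj /kron /proj /idmx /=.
rewrite [u == t]eq_sym andbC.
by case: (_ && _); case: (t == u); Cring.
Qed.

Lemma Pj_mul_entry (N : nat) (T U : finType) (j : 'I_N) (A : mx ('I_N * T)%type U) x y :
  mxmul (Pj j) A x y = if x.1 == j then A x y else C0.
Proof.
rewrite /mxmul /Pj /kron /proj /idmx.
rewrite (bigD1 x) //= !eqxx big1.
  by rewrite andbb; case: (x.1 == j); Cring.
move=> z hz; case hx: (x.1 == j) => /=; last by Cring.
case: eqP => [h1|_]; last by Cring.
case: eqP => [h2|_]; last by Cring.
by move: hz; rewrite (surjective_pairing x) (surjective_pairing z) h1 h2 (eqP hx) eqxx.
Qed.

Lemma mul_Pj_entry (N : nat) (T U : finType) (j : 'I_N) (A : mx U ('I_N * T)%type) x y :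
  mxmul A (Pj j) x y = if y.1 == j then A x y else C0.
Proof.
have -> : mxmul A (Pj j) = adj (mxmul (Pj j) (adj A)) by rewrite adj_mul adj_Pj adjK.
rewrite /adj Pj_mul_entry /=; case: (y.1 == j); [exact: CconjK | exact: Cconj0].
Qed.

Lemma Zmap_entry (N : nat) (T : finType) (M : mx ('I_N * T)%type ('I_N * T)%type) x y :
  Zmap M x y = if x.1 == y.1 then M x y else C0.
Proof.
rewrite Zmap_sum /mxsum.
under eq_bigr => k _ do rewrite mul_Pj_entry Pj_mul_entry.
rewrite (bigD1 x.1) //= eqxx big1.
  by rewrite Cadd0r eq_sym.
by move=> k /negbTE; rewrite eq_sym => ->; case: (y.1 == k).
Qed.

Definition bd (N : nat) (T : finType) (W : mx ('I_N * T)%type ('I_N * T)%type) :=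
  forall x y, x.1 != y.1 -> W x y = C0.

Lemma bd_Zmap (N : nat) (T : finType) (M : mx ('I_N * T)%type ('I_N * T)%type) : bd (Zmap M).
Proof. by move=> x y /negbTE h; rewrite Zmap_entry h. Qed.

Lemma bd_id (N : nat) (T : finType) : bd (@idmx ('I_N * T)%type).
Proof. move=> x y h; rewrite /idmx; case: eqP => // e; by rewrite e eqxx in h. Qed.

Lemma bd_mul (N : nat) (T : finType) (A B : mx ('I_N * T)%type ('I_N * T)%type) :
  bd A -> bd B -> bd (mxmul A B).
Proof.
move=> hA hB x y hxy; rewrite /mxmul big1 // => z _.
case: (eqVneq x.1 z.1) => e.
  rewrite hB ?Cmul0r //; by rewrite -e.
by rewrite hA ?Cmul0l.
Qed.

Lemma bd_pow (N : nat) (T : finType) (A : mx ('I_N * T)%type ('I_N * T)%type) k :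
  bd A -> bd (mpow A k).
Proof. move=> hA; elim: k => [|k IH] /=; [exact: bd_id | exact: bd_mul]. Qed.

Lemma trace_pinch (N : nat) (T : finType) (M W : mx ('I_N * T)%type ('I_N * T)%type) :
  bd W -> trace (mxmul (Zmap M) W) = trace (mxmul M W).
Proof.
move=> hW; rewrite /trace /mxmul; apply: eq_bigr => x _; apply: eq_bigr => z _.
rewrite Zmap_entry; case: eqP => // /eqP e.
rewrite hW; first by Cring.
by rewrite eq_sym.
Qed.

Lemma trace_pev_pinch (N : nat) (T : finType) (M : mx ('I_N * T)%type ('I_N * T)%type) p :
  trace (mxmul M (pevm p (Zmap M))) = trace (mxmul (Zmap M) (pevm p (Zmap M))).
Proof.
rewrite !trace_pev; apply: eq_bigr => i _.
rewrite trace_pinch //; apply: bd_pow; exact: bd_Zmap.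
Qed.

Definition mxzero' (T U : finType) := @mxzero T U.

Lemma mxmul0 (T U V : finType) (A : mx T U) : mxmul A (@mxzero U V) = @mxzero T V.
Proof. apply: mx_ext => i j; rewrite /mxmul /mxzero big1 // => k _; exact: Cmul0r. Qed.

Lemma PjPj (N : nat) (T U : finType) (j k : 'I_N) (X : mx ('I_N * T)%type U) :
  mxmul (Pj j) (mxmul (Pj k) X) = if j == k then mxmul (Pj j) X else @mxzero _ _.
Proof.
apply: mx_ext => x s; case: (eqVneq j k) => [<-|ne].
  by rewrite !Pj_mul_entry; case: (x.1 == j).
rewrite !Pj_mul_entry /mxzero.
case: (eqVneq x.1 j) => [e|//]; rewrite -e in ne; by rewrite (negbTE ne).
Qed.

Lemma gramPj (N : nat) (T U : finType) (j k : 'I_N) (X : mx ('I_N * T)%type U) :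
  mxmul (adj (mxmul (Pj j) X)) (mxmul (Pj k) X) =
  if j == k then mxmul (adj X) (mxmul (Pj j) X) else @mxzero _ _.
Proof.
rewrite adj_mul adj_Pj mxmulA PjPj; case: (j == k) => //; exact: mxmul0.
Qed.

Lemma sum_Pj (N : nat) (T U : finType) (X : mx ('I_N * T)%type U) :
  mxsum (fun j => mxmul (Pj j) X) = X.
Proof.
apply: mx_ext => x s; rewrite /mxsum.
under eq_bigr => k _ do rewrite Pj_mul_entry.
rewrite (bigD1 x.1) //= eqxx big1 ?Cadd0r // => k /negbTE.
by rewrite eq_sym => ->.
Qed.

Lemma gram_split (N : nat) (T U : finType) (X : mx ('I_N * T)%type U) :
  mxmul (adj X) X = mxsum (fun j => mxmul (adj X) (mxmul (Pj j) X)).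
Proof. by rewrite -mxmul_sumr sum_Pj. Qed.

Definition Yblk (N : nat) (T U : finType) (X : mx ('I_N * T)%type U) :=
  blk (fun j : 'I_N => mxmul (Pj j) X).

Lemma Zmap_gram (N : nat) (T U : finType) (X : mx ('I_N * T)%type U) :
  Zmap (mxmul X (adj X)) = mxmul (Yblk X) (adj (Yblk X)).
Proof.
rewrite /Yblk blk_gram Zmap_sum; apply: mxsum_ext => j.
by rewrite adj_mul adj_Pj !mxmulA.
Qed.

Lemma Ygram_eq (N : nat) (T1 T2 U : finType) (X1 : mx ('I_N * T1)%type U)
  (X2 : mx ('I_N * T2)%type U) :
  (forall j, mxmul (adj X1) (mxmul (Pj j) X1) = mxmul (adj X2) (mxmul (Pj j) X2)) ->
  mxmul (adj (Yblk X1)) (Yblk X1) = mxmul (adj (Yblk X2)) (Yblk X2).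
Proof.
move=> h; apply: mx_ext => ui vj; rewrite /Yblk !blk_adj_mul !gramPj.
by case: (ui.2 == vj.2); rewrite ?h.
Qed.

Lemma Xgram_eq (N : nat) (T1 T2 U : finType) (X1 : mx ('I_N * T1)%type U)
  (X2 : mx ('I_N * T2)%type U) :
  (forall j, mxmul (adj X1) (mxmul (Pj j) X1) = mxmul (adj X2) (mxmul (Pj j) X2)) ->
  mxmul (adj X1) X1 = mxmul (adj X2) X2.
Proof. move=> h; rewrite !gram_split; apply: mxsum_ext => j; exact: h. Qed.

Lemma applyv_mul (T U V : finType) (A : mx T U) (B : mx U V) v :
  applyv (mxmul A B) v = applyv A (applyv B v).
Proof.
apply: functional_extensionality => i; rewrite /applyv /mxmul.
under eq_bigr => j _ do rewrite big_distrl.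
rewrite exchange_big; apply: eq_bigr => k _; rewrite big_distrr; apply: eq_bigr => j _ /=.
exact/esym/CmulA.
Qed.

Lemma inner_adj (T U : finType) (A : mx T U) u v :
  inner u (applyv A v) = inner (applyv (adj A) u) v.
Proof.
rewrite /inner /applyv.
under eq_bigr => i _ do rewrite big_distrr.
rewrite exchange_big; apply: eq_bigr => j _.
rewrite Cconj_sum big_distrl; apply: eq_bigr => i _ /=; rewrite /adj.
Cring.
Qed.

Lemma sumR_ge0 (I : finType) (F : I -> R) :
  (forall i, Rle R0 (F i)) -> Rle R0 (\big[Rplus/R0]_(i : I) F i).
Proof.
move=> h; apply: (big_ind (fun x => Rle R0 x)) => //; first exact: Rle_refl.
move=> x y hx hy; lra.
Qed.

Lemma sumR_eq0 (I : finType) (F : I -> R) :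
  (forall i, Rle R0 (F i)) -> \big[Rplus/R0]_(i : I) F i = R0 -> forall i, F i = R0.
Proof.
move=> h hs i; move: hs; rewrite (bigD1 i) //= => hs.
have h3 := h i; apply: Rle_antisym; last exact: h3.
have : Rle R0 (\big[Rplus/R0]_(j | j != i) F j).
  apply: (big_ind (fun x => Rle R0 x)) => //; first exact: Rle_refl.
  move=> x y hx hy; lra.
lra.
Qed.

Lemma inner_self0 (T : finType) (w : T -> C) :
  Cre (inner w w) = R0 -> w = (fun _ => C0).
Proof.
rewrite /inner Cre_sum => h.
have hi := sumR_eq0 (F := fun i => Cre (Cmul (Cconj (w i)) (w i))).
apply: functional_extensionality => i.
have : Cre (Cmul (Cconj (w i)) (w i)) = R0.
  apply: hi; last exact: h.
  move=> j /=; nra.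
rewrite /= => e; apply: C_eq => /=; nra.
Qed.

Lemma applyv0 (T U : finType) (A : mx T U) : applyv A (fun _ => C0) = (fun _ => C0).
Proof. apply: functional_extensionality => i; rewrite /applyv big1 // => j _; exact: Cmul0r. Qed.

Lemma inner0 (T : finType) (u : T -> C) : inner u (fun _ => C0) = C0.
Proof. rewrite /inner big1 // => j _; exact: Cmul0r. Qed.

Lemma kernel_gram (N : nat) (T U : finType) (X : mx ('I_N * T)%type U) :
  kernel_incl (Zmap (mxmul X (adj X))) (mxmul X (adj X)).
Proof.
move=> v hv; rewrite Zmap_gram in hv.
have hw : applyv (adj (Yblk X)) v = (fun _ => C0).
  apply: inner_self0; rewrite -inner_adj -applyv_mul hv inner0 //.
have hx : applyv (adj X) v = (fun _ => C0).
  apply: functional_extensionality => s.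
  have e : forall t, X t s = \big[Cadd/C0]_(j : 'I_N) mxmul (Pj j) X t s.
    by move=> t; rewrite -[in LHS](sum_Pj X).
  rewrite /applyv.
  under eq_bigr => t _ do rewrite /adj e Cconj_sum big_distrl.
  rewrite exchange_big big1 // => j _.
  have h := congr1 (fun f => f (s, j)) hw; rewrite /= /applyv /adj /Yblk /blk /= in h.
  exact: h.
by rewrite applyv_mul hx applyv0.
Qed.


Module Part3.
Import GRing.Theory Num.Theory.
Local Open Scope sesquilinear_scope.

Notation K := (complex R).

Definition psi (k : K) : C := mkC (complex.Re k) (complex.Im k).
Definition phi (z : C) : K := Complex (Cre z) (Cim z).

Lemma psiD (a b : K) : psi (a + b)%R = Cadd (psi a) (psi b).
Proof. by case: a => ? ?; case: b => ? ?. Qed.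
Lemma psiM (a b : K) : psi (a * b)%R = Cmul (psi a) (psi b).
Proof. by case: a => ? ?; case: b => ? ?. Qed.
Lemma psi0 : psi 0%R = C0. Proof. by []. Qed.
Lemma psi1 : psi 1%R = C1. Proof. by []. Qed.
Lemma psiC (a : K) : psi (Num.conj a) = Cconj (psi a).
Proof. by case: a. Qed.
Lemma psiK z : psi (phi z) = z. Proof. by case: z. Qed.
Lemma phiK k : phi (psi k) = k. Proof. by case: k. Qed.

Lemma psi_sum (I : Type) (r : seq I) (P : pred I) (F : I -> K) :
  psi (\sum_(i <- r | P i) F i)%R = \big[Cadd/C0]_(i <- r | P i) psi (F i).
Proof. exact: (big_morph psi psiD psi0). Qed.

Lemma sum_enum (T : finType) (F : T -> C) :
  \big[Cadd/C0]_(t : T) F t = \big[Cadd/C0]_(i < #|T|) F (enum_val i).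
Proof.
rewrite (reindex (@enum_val T xpredT)) //.
exists enum_rank => i _; [exact: enum_valK | exact: enum_rankK].
Qed.

Definition toM (T U : finType) (A : mx T U) : 'M[K]_(#|T|, #|U|) :=
  \matrix_(i, j) phi (A (enum_val i) (enum_val j)).
Definition ofM (T U : finType) (M : 'M[K]_(#|T|, #|U|)) : mx T U :=
  fun t u => psi (M (enum_rank t) (enum_rank u)).

Lemma ofMK (T U : finType) (A : mx T U) : ofM (toM A) = A.
Proof. apply: mx_ext => t u; by rewrite /ofM /toM mxE !enum_rankK psiK. Qed.

Lemma ofM_mul (T U V : finType) (M : 'M[K]_(#|T|, #|U|)) (N : 'M[K]_(#|U|, #|V|)) :
  ofM (M *m N)%R = mxmul (ofM M) (ofM N).
Proof.
apply: mx_ext => t v; rewrite /ofM /mxmul mxE psi_sum [RHS]sum_enum.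
apply: eq_bigr => i _; by rewrite psiM enum_valK.
Qed.

Lemma ofM_adj (T U : finType) (M : 'M[K]_(#|T|, #|U|)) :
  ofM (M ^t Num.conj)%R = adj (ofM M).
Proof. apply: mx_ext => t u; by rewrite /ofM /adj !mxE psiC. Qed.

Lemma toM_adj (T U : finType) (A : mx T U) :
  toM (adj A) = ((toM A) ^t Num.conj)%R.
Proof.
apply/matrixP => i j; rewrite /toM !mxE /adj.
by case: (A _ _).
Qed.

Lemma ofM_id (T : finType) : ofM (1%:M : 'M[K]_#|T|)%R = @idmx T.
Proof.
apply: mx_ext => t u; rewrite /ofM /idmx mxE.
case: (eqVneq t u) => [->|ne]; first by rewrite eqxx.
have -> : (enum_rank t == enum_rank u) = false.
  by apply/negbTE; apply: contra ne => /eqP/enum_rank_inj ->.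
by [].
Qed.

Lemma ofM_diag (T : finType) (sp : 'rV[K]_#|T|) :
  (forall i, complex.Im (sp 0%R i) = 0%R) ->
  ofM (diag_mx sp) = diagR (fun t => complex.Re (sp 0%R (enum_rank t))).
Proof.
move=> h; apply: mx_ext => t u; rewrite /ofM /diagR mxE.
case: (eqVneq t u) => [<-|ne]; first by rewrite eqxx mulr1n /psi h.
have -> : (enum_rank t == enum_rank u) = false.
  by apply/negbTE; apply: contra ne => /eqP/enum_rank_inj ->.
by rewrite mulr0n.
Qed.

Lemma spectral_herm (T : finType) (A : mx T T) : adj A = A -> exists p, spectral A p.
Proof.
move=> hA.
pose Ah := toM A.
have hAh : Ah ^t Num.conj = Ah by rewrite /Ah -toM_adj hA.
have hn : Ah \is normalmx by rewrite qualifE hAh.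
have hherm : Ah \is hermsymmx by apply/is_hermitianmxP; rewrite expr0 scale1r hAh.
have hreal := hermitian_spectral_diag_real hherm.
have hdec := (orthomx_spectralP hn).
set P := spectralmx Ah in hdec.
set sp := spectral_diag Ah in hdec hreal.
have hPu : P \is unitarymx := spectral_unitarymx Ah.
have him : forall i, complex.Im (sp 0%R i) = 0%R.
  move=> i; have /mxOverP /(_ 0%R i) hi := hreal.
  by have := congr1 (@complex.Re R) (RIm_real hi).
have hPP : (P *m P ^t Num.conj = 1%:M)%R by apply/unitarymxP.
have hinv : invmx P = P ^t Num.conj by rewrite invmx_unitary.
have hPu' : (P ^t Num.conj *m P = 1%:M)%R by rewrite -hinv mulVmx // unitarymx_unit.
exists (ofM (P ^t Num.conj), fun t => complex.Re (sp 0%R (enum_rank t))); split => /=.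
  rewrite /unitary -ofM_adj trmxCK -!ofM_mul hPP hPu'.
  by split; apply: ofM_id.
rewrite -ofM_adj trmxCK -ofM_diag // -!ofM_mul -hinv -hdec.
by rewrite /Ah ofMK.
Qed.

End Part3.
Import Part3.


Definition Bf (T : finType) (M : mx T T) (u v : T -> C) : C :=
  \big[Cadd/C0]_(a : T) \big[Cadd/C0]_(b : T) Cmul (Cmul (Cconj (u a)) (M a b)) (v b).

Lemma inner_Bf (T : finType) (M : mx T T) u v : inner u (applyv M v) = Bf M u v.
Proof.
rewrite /inner /Bf /applyv; apply: eq_bigr => a _; rewrite big_distrr; apply: eq_bigr => b _ /=.
exact: CmulA.
Qed.

Definition vadd (T : finType) (u v : T -> C) := fun i => Cadd (u i) (v i).
Definition vsc (T : finType) (c : C) (u : T -> C) := fun i => Cmul c (u i).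
Definition ev (T : finType) (i : T) : T -> C := fun a => if a == i then C1 else C0.

Lemma Bf_addl (T : finType) (M : mx T T) u1 u2 v :
  Bf M (vadd u1 u2) v = Cadd (Bf M u1 v) (Bf M u2 v).
Proof.
rewrite /Bf -big_split; apply: eq_bigr => a _; rewrite -big_split; apply: eq_bigr => b _ /=.
rewrite /vadd; Cring.
Qed.
Lemma Bf_addr (T : finType) (M : mx T T) u v1 v2 :
  Bf M u (vadd v1 v2) = Cadd (Bf M u v1) (Bf M u v2).
Proof.
rewrite /Bf -big_split; apply: eq_bigr => a _; rewrite -big_split; apply: eq_bigr => b _ /=.
rewrite /vadd; Cring.
Qed.
Lemma Bf_scl (T : finType) (M : mx T T) c u v :
  Bf M (vsc c u) v = Cmul (Cconj c) (Bf M u v).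
Proof.
rewrite /Bf big_distrr; apply: eq_bigr => a _; rewrite big_distrr; apply: eq_bigr => b _ /=.
rewrite /vsc; Cring.
Qed.
Lemma Bf_scr (T : finType) (M : mx T T) c u v :
  Bf M u (vsc c v) = Cmul c (Bf M u v).
Proof.
rewrite /Bf big_distrr; apply: eq_bigr => a _; rewrite big_distrr; apply: eq_bigr => b _ /=.
rewrite /vsc; Cring.
Qed.

Lemma sum_ev (T : finType) (i : T) (F : T -> C) :
  \big[Cadd/C0]_(a : T) Cmul (if a == i then C1 else C0) (F a) = F i.
Proof.
rewrite (bigD1 i) //= eqxx big1; first by Cring.
move=> a /negbTE ->; Cring.
Qed.

Lemma Bf_ev (T : finType) (M : mx T T) i j : Bf M (ev i) (ev j) = M i j.
Proof.
rewrite /Bf /ev.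
have e : forall a, \big[Cadd/C0]_(b : T) Cmul (Cmul (Cconj (if a == i then C1 else C0)) (M a b))
                     (if b == j then C1 else C0)
          = Cmul (if a == i then C1 else C0) (M a j).
  move=> a; rewrite (bigD1 j) //= eqxx big1.
    by case: (a == i); Cring.
  by move=> b /negbTE ->; Cring.
under eq_bigr => a _ do rewrite e.
exact: sum_ev.
Qed.

Lemma psd_herm (T : finType) (M : mx T T) : psd M -> adj M = M.
Proof.
move=> h.
have hq : forall v, Cim (Bf M v v) = R0 by move=> v; rewrite -inner_Bf; case: (h v).
apply: mx_ext => i j; rewrite /adj.
have h1 := hq (vadd (ev j) (ev i)).
have h2 := hq (vadd (ev j) (vsc (mkC R0 R1) (ev i))).
have hi := hq (ev i); have hj := hq (ev j).
rewrite !Bf_addl !Bf_addr !Bf_scl !Bf_scr !Bf_ev in h1 h2 hi hj.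
move: h1 h2 hi hj; case: (M i j) => a b; case: (M j i) => c d; case: (M i i) => ? ?; case: (M j j) => ? ? /=.
move=> *; apply: C_eq => /=; nra.
Qed.

Lemma diagR_mul (T : finType) (a b : T -> R) :
  mxmul (diagR a) (diagR b) = diagR (fun t => Rmult (a t) (b t)).
Proof.
apply: mx_ext => i j; rewrite /mxmul /diagR (bigD1 i) //= eqxx big1.
  case: (i == j); Cring.
by move=> k; rewrite eq_sym => /negbTE ->; Cring.
Qed.

Lemma unitary_conj (T : finType) (U D : mx T T) : unitary U ->
  mxmul (mxmul (adj U) (mxmul (mxmul U D) (adj U))) U = D.
Proof.
case=> h1 h2.
by rewrite -!mxmulA h1 mul1mx mxmulA h1 mxmul1.
Qed.

Lemma inner_diag (T : finType) (f : T -> R) (w : T -> C) :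
  inner w (applyv (diagR f) w) = \big[Cadd/C0]_(t : T) Cmul (RtoC (f t)) (Cmul (Cconj (w t)) (w t)).
Proof.
rewrite /inner /applyv /diagR; apply: eq_bigr => t _.
rewrite (bigD1 t) //= eqxx big1.
  Cring.
by move=> k; rewrite eq_sym => /negbTE ->; Cring.
Qed.

Lemma inner_adj' (T U : finType) (A : mx T U) u v :
  inner (applyv A u) v = inner u (applyv (adj A) v).
Proof. by rewrite inner_adj adjK. Qed.

Lemma psd_diag (T : finType) (U : mx T T) (f : T -> R) :
  (forall t, Rle R0 (f t)) -> psd (mxmul (mxmul U (diagR f)) (adj U)).
Proof.
move=> hf v.
rewrite applyv_mul applyv_mul inner_adj inner_diag Cim_sum Cre_sum.
split.
  rewrite big1 // => t _ /=; ring.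
apply: sumR_ge0 => t /=.
have := hf t; nra.
Qed.

Lemma spectral_psd (T : finType) (P : mx T T) p : psd P -> spectral P p -> forall t, Rle R0 (p.2 t).
Proof.
move=> hP [hU hdec] t.
have hD : mxmul (mxmul (adj p.1) P) p.1 = diagR p.2.
  by rewrite hdec unitary_conj.
have := hP (applyv p.1 (ev t)); case=> _.
rewrite inner_adj' -applyv_mul -applyv_mul hD inner_diag.
rewrite (bigD1 t) //= big1.
  rewrite /ev eqxx /=; lra.
move=> k hk; rewrite /ev (negbTE hk); Cring.
Qed.

Lemma conj_mul (T : finType) (U A B : mx T T) : mxmul (adj U) U = @idmx T ->
  mxmul (mxmul (mxmul U A) (adj U)) (mxmul (mxmul U B) (adj U)) = mxmul (mxmul U (mxmul A B)) (adj U).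
Proof. move=> h; by rewrite !mxmulA -(mxmulA (adj U) U) h mul1mx. Qed.

Lemma sqrt_exists (T : finType) (P : mx T T) : psd P -> exists N, psd N /\ mxmul N N = P.
Proof.
move=> hP.
have [p hp] := spectral_herm (psd_herm hP).
have hd := spectral_psd hP hp.
case: hp => [[h1 h2] hdec].
exists (mxmul (mxmul p.1 (diagR (fun t => sqrt (p.2 t)))) (adj p.1)); split.
  apply: psd_diag => t; exact: sqrt_pos.
rewrite conj_mul // diagR_mul hdec.
congr mxmul; congr mxmul; congr diagR; apply: functional_extensionality => t.
exact: sqrt_sqrt.
Qed.

Lemma sqrtm_spec (T : finType) (P : mx T T) : psd P -> psd (sqrtm P) /\ mxmul (sqrtm P) (sqrtm P) = P.
Proof.
move=> hP; rewrite /sqrtm.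
exact: (epsilon_spec (inhabits (@mxzero T T)) (fun N => psd N /\ mxmul N N = P) (sqrt_exists hP)).
Qed.

Lemma sqrtm_gram (T : finType) (P : mx T T) : psd P -> mxmul (adj (sqrtm P)) (sqrtm P) = P.
Proof. move=> hP; have [h1 h2] := sqrtm_spec hP; by rewrite psd_herm. Qed.


Module Part5.
Import GRing.Theory Num.Theory.

Definition specp (T : finType) (M : mx T T) : mx T T * (T -> R) :=
  epsilon (inhabits (@idmx T, fun _ : T => IZR Z0)) (spectral M).

Lemma funmE (T : finType) (f : R -> R) (M : mx T T) :
  funm f M = mxmul (mxmul (specp M).1 (diagR (fun i => f ((specp M).2 i)))) (adj (specp M).1).
Proof. by []. Qed.

Lemma specp_spec (T : finType) (M : mx T T) : (exists p, spectral M p) -> spectral M (specp M).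
Proof. move=> h; exact: (epsilon_spec (inhabits (@idmx T, fun _ : T => IZR Z0)) (spectral M) h). Qed.

Lemma diagR1 (T : finType) : diagR (fun _ : T => R1) = @idmx T.
Proof. by apply: mx_ext => i j; rewrite /diagR /idmx; case: (i == j). Qed.

Lemma mpow_spec (T : finType) (U : mx T T) (d : T -> R) k : unitary U ->
  mpow (mxmul (mxmul U (diagR d)) (adj U)) k = mxmul (mxmul U (diagR (fun t => ((d t) ^+ k)%R))) (adj U).
Proof.
case=> h1 h2; elim: k => [|k IH] /=.
  have -> : (fun t => ((d t) ^+ 0)%R) = (fun _ => R1) by [].
  by rewrite diagR1 mxmul1 h2.
rewrite IH conj_mul // diagR_mul; congr mxmul; congr mxmul; congr diagR.
apply: functional_extensionality => t; by rewrite exprS.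
Qed.

Lemma mscale_conj (T : finType) (U D : mx T T) c :
  mscale c (mxmul (mxmul U D) (adj U)) = mxmul (mxmul U (mscale c D)) (adj U).
Proof.
apply: mx_ext => i j; rewrite /mscale /mxmul big_distrr; apply: eq_bigr => k _.
rewrite !big_distrl big_distrr; apply: eq_bigr => l _ /=; Cring.
Qed.

Lemma mscale_diag (T : finType) r (g : T -> R) :
  mscale (RtoC r) (diagR g) = diagR (fun t => Rmult r (g t)).
Proof. apply: mx_ext => i j; rewrite /mscale /diagR; case: (i == j); Cring. Qed.

Lemma mxsum_diag (T I : finType) (g : I -> T -> R) :
  mxsum (fun i => diagR (g i)) = diagR (fun t => \big[Rplus/R0]_(i : I) g i t).
Proof.
apply: mx_ext => a b; rewrite /mxsum /diagR; case: (a == b); rewrite ?RtoC_sum //.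
by rewrite big1.
Qed.

Lemma pevm_spec (T : finType) (U : mx T T) (d : T -> R) (q : {poly R}) : unitary U ->
  pevm q (mxmul (mxmul U (diagR d)) (adj U)) = mxmul (mxmul U (diagR (fun t => q.[d t]%R))) (adj U).
Proof.
move=> hU; rewrite /pevm.
under mxsum_ext => i do rewrite mpow_spec // mscale_conj mscale_diag.
rewrite -mxmul_suml -mxmul_sumr mxsum_diag; congr mxmul; congr mxmul; congr diagR.
apply: functional_extensionality => t; by rewrite horner_coef.
Qed.

Lemma funm_pev (T : finType) (f : R -> R) (M : mx T T) (q : {poly R}) :
  (exists p, spectral M p) -> (forall t, q.[(specp M).2 t]%R = f ((specp M).2 t)) ->
  funm f M = pevm q M.
Proof.
move=> hex hq; have [hU hdec] := specp_spec hex.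
rewrite funmE [in RHS]hdec pevm_spec //.
congr mxmul; congr mxmul; congr diagR; apply: functional_extensionality => t.
by rewrite hq.
Qed.

Lemma interp (xs : seq R) (f : R -> R) : exists q : {poly R}, forall x, x \in xs -> q.[x]%R = f x.
Proof.
elim: xs => [|x xs [q hq]]; first by exists 0%R.
case: (boolP (x \in xs)) => hx.
  exists q => y; rewrite inE => /orP [/eqP ->|]; [exact: hq | exact: hq].
pose w := (\prod_(z <- xs) ('X - z%:P))%R.
have hw : forall z, z \in xs -> w.[z]%R = 0%R.
  by move=> z hz; apply/rootP; rewrite root_prod_XsubC.
have hwx : w.[x]%R != 0%R by rewrite -/(root w x) root_prod_XsubC.
exists (q + ((f x - q.[x]) / w.[x]) *: w)%R => y; rewrite inE => /orP [/eqP ->|hy].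
  by rewrite hornerD hornerZ divfK // addrC subrK.
by rewrite hornerD hornerZ (hw y hy) mulr0 addr0 hq.
Qed.

End Part5.
Import Part5.


Definition evs (T : finType) (M : mx T T) : seq R := [seq (specp M).2 t | t <- enum T].

Lemma herm_gram (T U : finType) (X : mx T U) : adj (mxmul X (adj X)) = mxmul X (adj X).
Proof. by rewrite adj_mul adjK. Qed.

Lemma spec_gram (T U : finType) (X : mx T U) : exists p, spectral (mxmul X (adj X)) p.
Proof. apply: spectral_herm; exact: herm_gram. Qed.

Lemma relent_gram (N : nat) (T1 T2 S : finType) (X1 : mx ('I_N * T1)%type S)
  (X2 : mx ('I_N * T2)%type S) :
  (forall j, mxmul (adj X1) (mxmul (Pj j) X1) = mxmul (adj X2) (mxmul (Pj j) X2)) ->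
  relent (mxmul X1 (adj X1)) (Zmap (mxmul X1 (adj X1))) =
  relent (mxmul X2 (adj X2)) (Zmap (mxmul X2 (adj X2))).
Proof.
move=> h.
have hX := Xgram_eq h; have hY := Ygram_eq h.
pose f := fun x => if Rlt_dec R0 x then log2 x else R0.
have [q hq] := interp (evs (mxmul X1 (adj X1)) ++ evs (mxmul X2 (adj X2)) ++
  evs (Zmap (mxmul X1 (adj X1))) ++ evs (Zmap (mxmul X2 (adj X2)))) f.
have hZ1 : exists p, spectral (Zmap (mxmul X1 (adj X1))) p by rewrite Zmap_gram; exact: spec_gram.
have hZ2 : exists p, spectral (Zmap (mxmul X2 (adj X2))) p by rewrite Zmap_gram; exact: spec_gram.
have mem : forall (T : finType) (M : mx T T) t, (specp M).2 t \in evs M.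
  by move=> T M t; apply: map_f; rewrite mem_enum.
rewrite /relent /log2m.
rewrite !(@funm_pev _ _ _ q) //; try (by move=> t; apply: hq; rewrite !mem_cat mem ?orbT);
  try exact: spec_gram.
destruct (excluded_middle_informative (kernel_incl (Zmap (mxmul X1 (adj X1))) (mxmul X1 (adj X1)))) as [k|hn];
  last by case: hn; exact: kernel_gram.
destruct (excluded_middle_informative (kernel_incl (Zmap (mxmul X2 (adj X2))) (mxmul X2 (adj X2)))) as [k'|hn];
  last by case: hn; exact: kernel_gram.
rewrite (trace_pev_gram _ hX).
rewrite /= !trace_pev_pinch !Zmap_gram (trace_pev_gram _ hY) //.
Qed.


Lemma sum_pair (I J : finType) (F : (I * J)%type -> C) :
  \big[Cadd/C0]_(p : I * J) F p = \big[Cadd/C0]_(i : I) \big[Cadd/C0]_(j : J) F (i, j).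
Proof. by rewrite (pair_bigA _ (fun i j => F (i, j))); apply: eq_bigr => -[]. Qed.

Definition cdelta (T : eqType) (x y : T) : C := if x == y then C1 else C0.

Lemma ket_tens_mul (T U V S : finType) (i : S) (M : mx T U) (B : mx U V) :
  mxmul (ket_tens i M) B = ket_tens i (mxmul M B).
Proof.
apply: mx_ext => x y; rewrite /mxmul /ket_tens; case: (x.1 == i) => //.
rewrite big1 // => k _; exact: Cmul0l.
Qed.

Lemma kron_scalel (T1 U1 T2 U2 : finType) c (A : mx T1 U1) (B : mx T2 U2) :
  kron (mscale c A) B = kron A (mscale c B).
Proof. apply: mx_ext => x y; rewrite /kron /mscale; Cring. Qed.

Lemma kron_sumr (T1 U1 T2 U2 I : finType) (A : mx T1 U1) (F : I -> mx T2 U2) :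
  kron A (mxsum F) = mxsum (fun k => kron A (F k)).
Proof. apply: mx_ext => x y; by rewrite /kron /mxsum big_distrr. Qed.

Lemma ket_tens_gram (N : nat) (T U V : finType) (i i' j : 'I_N) (M : mx T U) (M' : mx T V) :
  mxmul (adj (ket_tens i M)) (mxmul (Pj j) (ket_tens i' M')) =
  if (i == j) && (i' == j) then mxmul (adj M) M' else @mxzero _ _.
Proof.
have e : mxmul (Pj j) (ket_tens i' M') = fun x y =>
   if (x.1 == j) && (x.1 == i') then M' x.2 y else C0.
  by apply: mx_ext => x y; rewrite Pj_mul_entry /ket_tens; case: (x.1 == j).
rewrite e; apply: mx_ext => u v; rewrite /mxmul.
rewrite sum_pair (bigD1 i) //= [X in Cadd _ X]big1.
  rewrite Cadd0r /adj /ket_tens /= eqxx.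
  case: (eqVneq i j) => [<-|ne] /=.
    rewrite eq_sym; case: (i' == i) => /=; last by rewrite /mxzero big1 // => t _; exact: Cmul0r.
    done.
  by rewrite /mxzero big1 // => t _; exact: Cmul0r.
move=> r hr; rewrite big1 // => t _; rewrite /adj /ket_tens /= (negbTE hr).
by rewrite Cconj0 Cmul0l.
Qed.

Section Struct.
Variables (HA HB Y SA SB : finType) (wB N : nat) (PB : Y -> mx HB HB)
  (fB : SB -> 'I_wB -> Y) (Kset : {set (SA * SB)%type}) (g : Kept Kset -> Y -> 'I_N).

Definition KB (b : SB) := KrausA PB fB b.
Definition gg (kb : (Kept Kset * 'I_wB)%type) : 'I_N := g kb.1 (fB (val kb.1).2 kb.2).
Definition QB (kb : (Kept Kset * 'I_wB)%type) : mx (HB * SB * 'I_wB)%type (HB * SB * 'I_wB)%type :=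
  kron (kron (@idmx HB) (proj (val kb.1).2)) (proj kb.2).
Definition B1 (a : SA) (b : SB) :=
  mxsum (fun k : Kept Kset => mscale (cdelta (val k).1 a) (mxmul (@projB HB SB wB (val k).2) (KB b))).
Definition B2 (a : SA) (b : SB) (kb : (Kept Kset * 'I_wB)%type) :=
  mscale (cdelta (val kb.1).1 a) (mxmul (QB kb) (B1 a b)).

Definition Wg (WA : finType) (pA : SA -> mx WA WA) (KA : SA -> mx WA HA) (a : SA) (b : SB) :=
  mxmul (keyiso (HB:=HB) fB g pA) (mxmul (sift Kset pA (@projB HB SB wB)) (kron (KA a) (KB b))).

Lemma Wform (WA : finType) (pA : SA -> mx WA WA) (KA : SA -> mx WA HA)
  (H1 : forall c a, mxmul (pA c) (KA a) = mscale (cdelta c a) (KA a)) a b :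
  Wg pA KA a b = mxsum (fun kb => ket_tens (gg kb) (kron (KA a) (B2 a b kb))).
Proof.
rewrite /Wg /sift mxmul_suml.
under mxsum_ext => k do rewrite kron_mul H1 kron_scalel.
rewrite -kron_sumr /keyiso mxmul_suml; apply: mxsum_ext => kb.
by rewrite ket_tens_mul kron_mul H1 kron_scalel.
Qed.

Lemma Eform (WA : finType) (pA : SA -> mx WA WA) (KA : SA -> mx WA HA)
  (H1 : forall c a, mxmul (pA c) (KA a) = mscale (cdelta c a) (KA a)) a b a' b' j :
  mxmul (adj (Wg pA KA a b)) (mxmul (Pj j) (Wg pA KA a' b')) =
  mxsum (fun kb => mxsum (fun kb' => if (gg kb == j) && (gg kb' == j) then
     kron (mxmul (adj (KA a)) (KA a')) (mxmul (adj (B2 a b kb)) (B2 a' b' kb'))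
     else @mxzero _ _)).
Proof.
rewrite !Wform // adj_sum mxmul_suml; apply: mxsum_ext => kb.
rewrite (mxmul_sumr (Pj j)) mxmul_sumr; apply: mxsum_ext => kb'.
by rewrite ket_tens_gram adj_kron kron_mul.
Qed.

Definition Xg (WA : finType) (pA : SA -> mx WA WA) (KA : SA -> mx WA HA) (Sq : mx (HA * HB)%type (HA * HB)%type) :=
  blk (fun ab : (SA * SB)%type => mxmul (Wg pA KA ab.1 ab.2) Sq).

Lemma Pj_blk (T U I : finType) (j : 'I_N) (F : I -> mx ('I_N * T)%type U) :
  mxmul (Pj j) (blk F) = blk (fun i => mxmul (Pj j) (F i)).
Proof. apply: mx_ext => x y; by rewrite /blk !Pj_mul_entry. Qed.

Lemma sandwich (T U V : finType) (W : mx T U) (Sq : mx U V) (P : mx T T) (W2 : mx T U) :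
  mxmul (adj (mxmul W Sq)) (mxmul P (mxmul W2 Sq)) =
  mxmul (adj Sq) (mxmul (mxmul (adj W) (mxmul P W2)) Sq).
Proof. by rewrite adj_mul !mxmulA. Qed.

Lemma Xg_gram_eq (WA1 WA2 : finType) (pA1 : SA -> mx WA1 WA1) (KA1 : SA -> mx WA1 HA)
  (pA2 : SA -> mx WA2 WA2) (KA2 : SA -> mx WA2 HA) Sq
  (H11 : forall c a, mxmul (pA1 c) (KA1 a) = mscale (cdelta c a) (KA1 a))
  (H12 : forall c a, mxmul (pA2 c) (KA2 a) = mscale (cdelta c a) (KA2 a))
  (H2 : forall a a', mxmul (adj (KA1 a)) (KA1 a') = mxmul (adj (KA2 a)) (KA2 a')) j :
  mxmul (adj (Xg pA1 KA1 Sq)) (mxmul (Pj j) (Xg pA1 KA1 Sq)) =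
  mxmul (adj (Xg pA2 KA2 Sq)) (mxmul (Pj j) (Xg pA2 KA2 Sq)).
Proof.
apply: mx_ext => x y; rewrite /Xg !Pj_blk !blk_adj_mul.
rewrite !sandwich (Eform H11) (Eform H12).
by under mxsum_ext => kb do under mxsum_ext => kb' do rewrite H2.
Qed.

Definition Ggen (WA : finType) (pA : SA -> mx WA WA) (KA : SA -> mx WA HA) (sigma : mx (HA * HB)%type (HA * HB)%type) :=
  let V := keyiso (HB:=HB) fB g pA in
  let Pi := sift Kset pA (@projB HB SB wB) in
  mxmul (mxmul V (mxmul (mxmul Pi (annmap KA KB sigma)) Pi)) (adj V).

Lemma Ggen_gram (WA : finType) (pA : SA -> mx WA WA) (KA : SA -> mx WA HA) Sq :
  adj (sift Kset pA (@projB HB SB wB)) = sift Kset pA (@projB HB SB wB) ->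
  Ggen pA KA (mxmul Sq (adj Sq)) = mxmul (Xg pA KA Sq) (adj (Xg pA KA Sq)).
Proof.
move=> hPi; rewrite /Xg blk_gram /Ggen /annmap /=.
rewrite (mxmul_sumr (sift Kset pA (@projB HB SB wB))).
rewrite (mxmul_suml _ (sift Kset pA (@projB HB SB wB))).
rewrite (mxmul_sumr (keyiso (HB:=HB) fB g pA)).
rewrite (mxmul_suml _ (adj (keyiso (HB:=HB) fB g pA))).
apply: mxsum_ext => ab.
rewrite /Wg !adj_mul hPi !mxmulA.
done.
Qed.

End Struct.


Lemma adj_proj (S : finType) (c : S) : adj (proj c) = proj c.
Proof. apply: mx_ext => i j; rewrite /adj /proj andbC; by case: (_ && _); Cring. Qed.

Lemma adj_projA (H S : finType) (w : nat) (c : S) : adj (@projA H S w c) = @projA H S w c.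
Proof. by rewrite /projA !adj_kron !adj_id adj_proj. Qed.
Lemma adj_projB (H S : finType) (w : nat) (c : S) : adj (@projB H S w c) = @projB H S w c.
Proof. exact: adj_projA. Qed.
Lemma adj_projA' (H S : finType) (c : S) : adj (@projA' H S c) = @projA' H S c.
Proof. by rewrite /projA' !adj_kron !adj_id adj_proj. Qed.

Lemma adj_sift (SA SB WA WB : finType) (Kset : {set (SA * SB)%type}) (pA : SA -> mx WA WA)
  (pB : SB -> mx WB WB) : (forall c, adj (pA c) = pA c) -> (forall c, adj (pB c) = pB c) ->
  adj (sift Kset pA pB) = sift Kset pA pB.
Proof.
move=> hA hB; rewrite /sift adj_sum; apply: mxsum_ext => k.
by rewrite adj_kron hA hB.
Qed.

Lemma projA_mul_entry (H S U : finType) (w : nat) (c : S) (M : mx (H * S * 'I_w)%type U) x u :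
  mxmul (@projA H S w c) M x u = if x.1.2 == c then M x u else C0.
Proof.
rewrite /mxmul /projA /kron /proj /idmx /=.
rewrite (bigD1 x) //= !eqxx andbb big1.
  by case: (x.1.2 == c); Cring.
move=> y hy.
case: (eqVneq x.1.1 y.1.1) => e1; last by Cring.
case: (eqVneq x.2 y.2) => e2; last by Cring.
case: (eqVneq x.1.2 c) => e3 /=; last by Cring.
case: (eqVneq y.1.2 c) => e4 /=; last by Cring.
move: hy; case: x e1 e2 e3 => [[? ?] ?]; case: y e4 => [[? ?] ?] /= -> -> -> ->.
by rewrite eqxx.
Qed.

Lemma projA'_mul_entry (H S U : finType) (c : S) (M : mx (H * S)%type U) x u :
  mxmul (@projA' H S c) M x u = if x.2 == c then M x u else C0.
Proof.
rewrite /mxmul /projA' /kron /proj /idmx /=.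
rewrite (bigD1 x) //= !eqxx andbb big1.
  by case: (x.2 == c); Cring.
move=> y hy.
case: (eqVneq x.1 y.1) => e1; last by Cring.
case: (eqVneq x.2 c) => e3 /=; last by Cring.
case: (eqVneq y.2 c) => e4 /=; last by Cring.
move: hy; case: x e1 e3 => [? ?]; case: y e4 => [? ?] /= -> -> ->.
by rewrite eqxx.
Qed.

Lemma KrausA_entry (H X S : finType) (w : nat) (P : X -> mx H H) (f : S -> 'I_w -> X) a x h :
  KrausA P f a x h = if x.1.2 == a then sqrtm (P (f a x.2)) x.1.1 h else C0.
Proof.
rewrite /KrausA /mxsum /tens_ket (bigD1 x.2) //= eqxx big1.
  by rewrite Cadd0r.
by move=> al; rewrite eq_sym => /negbTE ->.
Qed.

Lemma KrausA'_entry (H X S : finType) (w : nat) (P : X -> mx H H) (f : S -> 'I_w -> X) a x h :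
  KrausA' P f a x h = if x.2 == a then sqrtm (mxsum (fun al : 'I_w => P (f a al))) x.1 h else C0.
Proof. by []. Qed.

Lemma H1_inst1 (H X S : finType) (w : nat) (P : X -> mx H H) (f : S -> 'I_w -> X) c a :
  mxmul (@projA H S w c) (KrausA P f a) = mscale (cdelta c a) (KrausA P f a).
Proof.
apply: mx_ext => x h; rewrite projA_mul_entry /mscale /cdelta KrausA_entry.
case: (eqVneq x.1.2 c) => [->|ne]; first by case: (c == a); Cring.
case: (eqVneq x.1.2 a) => [e|ne']; last by Cring.
rewrite -e in ne *; rewrite eq_sym (negbTE ne); Cring.
Qed.

Lemma H1_inst2 (H X S : finType) (w : nat) (P : X -> mx H H) (f : S -> 'I_w -> X) c a :
  mxmul (@projA' H S c) (KrausA' P f a) = mscale (cdelta c a) (KrausA' P f a).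
Proof.
apply: mx_ext => x h; rewrite projA'_mul_entry /mscale /cdelta KrausA'_entry.
case: (eqVneq x.2 c) => [->|ne]; first by case: (c == a); Cring.
case: (eqVneq x.2 a) => [e|ne']; last by Cring.
rewrite -e in ne *; rewrite eq_sym (negbTE ne); Cring.
Qed.

Lemma tens_ket_gram (T U V S : finType) (k k' : S) (M : mx T U) (M' : mx T V) :
  mxmul (adj (tens_ket M k)) (tens_ket M' k') =
  if k == k' then mxmul (adj M) M' else @mxzero _ _.
Proof.
apply: mx_ext => u v; rewrite /mxmul sum_pair exchange_big (bigD1 k) //= [X in Cadd _ X]big1.
  rewrite Cadd0r /adj /tens_ket /= eqxx.
  case: (k == k') => //; rewrite /mxzero big1 // => t _; exact: Cmul0r.
move=> s hs; rewrite big1 // => t _; rewrite /adj /tens_ket /= (negbTE hs).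
by rewrite Cconj0 Cmul0l.
Qed.

Lemma mxsum_zero (T U I : finType) : mxsum (fun _ : I => @mxzero T U) = @mxzero T U.
Proof. apply: mx_ext => i j; by rewrite /mxsum /mxzero big1. Qed.

Lemma mxsum_delta (T U I : finType) (i : I) (F : I -> mx T U) :
  mxsum (fun j => if i == j then F j else @mxzero T U) = F i.
Proof.
apply: mx_ext => x y; rewrite /mxsum (bigD1 i) //= eqxx big1 ?Cadd0r //.
by move=> j; rewrite eq_sym => /negbTE ->.
Qed.

Lemma psd_sum (T I : finType) (F : I -> mx T T) : (forall k, psd (F k)) -> psd (mxsum F).
Proof.
move=> h v.
have e : inner v (applyv (mxsum F) v) = \big[Cadd/C0]_(k : I) inner v (applyv (F k) v).
  rewrite /inner /applyv /mxsum.
  under eq_bigr => i _ do (under eq_bigr => j _ do rewrite big_distrl; rewrite -exchange_big big_distrr).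
  rewrite exchange_big; apply: eq_bigr => k _; apply: eq_bigr => i _; done.
rewrite e Cim_sum Cre_sum; split.
  by rewrite big1 // => k _; case: (h k v).
by apply: sumR_ge0 => k; case: (h k v).
Qed.

Definition GA (H X S : finType) (w : nat) (P : X -> mx H H) (f : S -> 'I_w -> X) (a a' : S) :=
  if a == a' then mxsum (fun al : 'I_w => P (f a al)) else @mxzero H H.

Lemma H2_inst1 (H X S : finType) (w : nat) (P : X -> mx H H) (f : S -> 'I_w -> X) a a' :
  (forall x, psd (P x)) ->
  mxmul (adj (KrausA P f a)) (KrausA P f a') = GA P f a a'.
Proof.
move=> hP; rewrite /KrausA adj_sum mxmul_suml.
under mxsum_ext => al do rewrite mxmul_sumr.
under mxsum_ext => al do under mxsum_ext => al' do rewrite tens_ket_gram tens_ket_gram.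
rewrite /GA; case: (eqVneq a a') => [<-|ne].
  apply: mxsum_ext => al.
  rewrite (mxsum_delta al (fun al' => mxmul (adj (sqrtm (P (f a al)))) (sqrtm (P (f a al'))))).
  exact: sqrtm_gram.
under mxsum_ext => al do under mxsum_ext => al' do rewrite if_same.
by under mxsum_ext => al do rewrite mxsum_zero; rewrite mxsum_zero.
Qed.

Lemma H2_inst2 (H X S : finType) (w : nat) (P : X -> mx H H) (f : S -> 'I_w -> X) a a' :
  (forall x, psd (P x)) ->
  mxmul (adj (KrausA' P f a)) (KrausA' P f a') = GA P f a a'.
Proof.
move=> hP; rewrite /KrausA' tens_ket_gram /GA; case: (eqVneq a a') => [<-|//].
apply: sqrtm_gram; exact: psd_sum.
Qed.


Theorem mainTheorem2 (HA HB X Y SA SB : finType) (wA wB N : nat)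
  (PA : X -> mx HA HA) (PB : Y -> mx HB HB)
  (hPA : POVM PA) (hPB : POVM PB)
  (fA : SA -> 'I_wA -> X) (fB : SB -> 'I_wB -> Y)
  (hfA : bijective (fun p : (SA * 'I_wA)%type => fA p.1 p.2))
  (hfB : bijective (fun p : (SB * 'I_wB)%type => fB p.1 p.2))
  (Kset : {set (SA * SB)%type}) (g : Kept Kset -> Y -> 'I_N)
  (rho : mx (HA * HB)%type (HA * HB)%type) (hrho : density rho) :
  relent (Gmap PA PB fA fB g rho) (Zmap (Gmap PA PB fA fB g rho))
  = relent (Gmap' PA PB fA fB g rho) (Zmap (Gmap' PA PB fA fB g rho)).
Proof.
have hP : forall x, psd (PA x) by case: hPA.
have hr : psd rho by case: hrho.
pose Sq := sqrtm rho.
have hsig : rho = mxmul Sq (adj Sq).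
  have [h1 h2] := sqrtm_spec hr.
  by rewrite /Sq psd_herm.
have e1 : Gmap PA PB fA fB g rho =
    mxmul (Xg PB fB g (@projA HA SA wA) (KrausA PA fA) Sq)
          (adj (Xg PB fB g (@projA HA SA wA) (KrausA PA fA) Sq)).
  rewrite {1}hsig; apply: (Ggen_gram PB fB g (KrausA PA fA) Sq).
  apply: adj_sift => c; [exact: adj_projA | exact: adj_projB].
have e2 : Gmap' PA PB fA fB g rho =
    mxmul (Xg PB fB g (@projA' HA SA) (KrausA' PA fA) Sq)
          (adj (Xg PB fB g (@projA' HA SA) (KrausA' PA fA) Sq)).
  rewrite {1}hsig; apply: (Ggen_gram PB fB g (KrausA' PA fA) Sq).
  apply: adj_sift => c; [exact: adj_projA' | exact: adj_projB].
rewrite e1 e2; apply: relent_gram => j.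
apply: Xg_gram_eq.
- move=> c a; exact: H1_inst1.
- move=> c a; exact: H1_inst2.
- by move=> a a'; rewrite H2_inst1 // H2_inst2.
Qed.
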